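(* Let $(X,Z)\in\mathbb{R}^{n}\times\mathbb{R}^{n\times p}$ be any fixed design matrix and consider the linear model $Y=X\beta+Z\theta+\epsilon$, where the noise vector $\epsilon\in\mathbb{R}^n$ is exchangeable. Let $T(\cdot,\cdot;X,Z,\epsilon)$ be a function of a pair of $n\times n$ permutation matrices that satisfies the transferability condition: for all $P_{\pi_i},P_{\pi_j},P_\sigma\in\mathcal{S}_n$, $$T(P_{\pi_i},P_{\pi_j};X,Z,P_\sigma\epsilon)=T(P_\sigma^{-1}P_{\pi_i},P_\sigma^{-1}P_{\pi_j};X,Z,\epsilon).$$ Let $\mathcal{R}=\mathcal{R}(X,Z)\subseteq[n]$ be any row set (possibly depending on the design). Draw $P_{\pi_1\mid\mathcal{R}},\dots,P_{\pi_B\mid\mathcal{R}}$ uniformly at random from $\mathcal{S}_{n\mid\mathcal{R}}$, set $T_{i,0}=T(P_{\pi_i\mid\mathcal{R}},I_n;X,Z,\epsilon)$ and $T_{0,i}=T(I_n,P_{\pi_i\mid\mathcal{R}};X,Z,\epsilon)$, and define $$p_{\text{val}}=\frac{1}{B+1}\Big[1+\sum_{i=1}^B\mathbb{I}(T_{i,0}>T_{0,i})+\tfrac12\mathbb{I}(T_{i,0}=T_{0,i})\Big].$$ Then under the null hypothesis $\mathcal{H}_0:\beta=0$, $pr(p_{\text{val}}\le\alpha\mid\mathcal{H}_0)<2\alpha$ for all $\alpha>0$.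
   Context: $[n]=\{1,\dots,n\}$. $\mathcal{S}_n$ denotes the group of all $n\times n$ permutation matrices; a permutation $\pi$ of $[n]$ corresponds to $P_\pi=(p_{ij})$ with $p_{ij}=1$ iff $\pi(i)=j$. For $\mathcal{R}\subseteq[n]$, $\mathcal{S}_{n\mid\mathcal{R}}$ is the subgroup of permutation matrices $P_{\pi\mid\mathcal{R}}$ with $p_{ii}=1$ for all $i\in\mathcal{R}$ (i.e. permutations fixing every row in $\mathcal{R}$). A noise vector $\epsilon$ is exchangeable if $P\epsilon$ has the same distribution as $\epsilon$ for every $P\in\mathcal{S}_n$. $\mathbb{I}$ is the indicator function. *)

(* Defs.v *)
From HB Require Import structures.
From mathcomp Require Import all_boot all_order all_algebra all_fingroup.
From mathcomp Require Import all_classical all_reals all_analysis.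
Set Implicit Arguments. Unset Strict Implicit. Unset Printing Implicit Defensive.
Import Order.TTheory GRing.Theory Num.Theory.
Local Open Scope ring_scope.

(* Permutation pi of [n] <-> permutation matrix P_pi with (P_pi)_{ij} = 1 iff pi(i)=j;
   this is mathcomp's [perm_mx pi].  With mathcomp's convention (s * t)%g = t \o s
   we have perm_mx (s * t) = perm_mx s *m perm_mx t, so P_s^{-1} P_t corresponds to
   the permutation (s^-1 * t)%g. *)

(* The action of P_s on a vector e of R^n (stored as an n-tuple):
   (P_s e)_i = sum_j (P_s)_{ij} e_j = e_{s(i)}. *)
Definition permv (R : Type) (n : nat) (s : 'S_n) (e : n.-tuple R) : n.-tuple R :=
  [tuple tnth e (s i) | i < n].

Definition tcol (R : Type) (n : nat) (e : n.-tuple R) : 'cV[R]_n :=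
  \col_i tnth e i.

Definition fix_rows (n : nat) (Rs : {set 'I_n}) : {set 'S_n} :=
  [set s : 'S_n | [forall i in Rs, s i == i]].

Definition pval (R : realType) (B : nat) (Ti0 T0i : 'I_B -> R) : R :=
  (1 + \sum_(i < B) ((nat_of_bool (T0i i < Ti0 i)%R)%:R + 2^-1 * (nat_of_bool (Ti0 i == T0i i))%:R))
  / (B.+1)%:R.

(* Probability that p_val <= alpha, where pis = (pi_1,...,pi_B) are drawn i.i.d.
   uniformly from G = S_{n|R}, independently of the noise eps (distributed
   according to P):  pr = |G|^{-B} * sum_{pis in G^B} P(pval(pis, eps) <= alpha). *)
Definition pr_reject (R : realType) (d : measure_display) (Omega : measurableType d)
  (P : probability Omega R) (n B : nat) (G : {set 'S_n})
  (T : 'S_n -> 'S_n -> n.-tuple R -> R) (eps : Omega -> n.-tuple R) (alpha : R)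
  : \bar R :=
  ((\sum_(pis : {ffun 'I_B -> 'S_n} | [forall i, pis i \in G])
      P [set w | pval (fun i => T (pis i) 1%g (eps w))
                      (fun i => T 1%g (pis i) (eps w)) <= alpha]%R%classic)
   * ((#|G| ^ B)%:R^-1)%:E)%E.

(* Main.v *)
Require Import Defs.
From HB Require Import structures.
From mathcomp Require Import all_boot all_order all_algebra all_fingroup.
From mathcomp Require Import all_classical all_reals all_analysis.
From mathcomp Require Import measurable_realfun.
From mathcomp Require Import ring lra.
Import Order.TTheory GRing.Theory Num.Theory.
Local Open Scope classical_set_scope.
Local Open Scope ring_scope.
Set Implicit Arguments. Unset Strict Implicit. Unset Printing Implicit Defensive.
Lemma natb_measurable d (T : measurableType d) (R : realType) (b : T -> bool) :
  measurable_fun setT b -> measurable_fun setT (fun x => ((b x : nat)%:R : R)).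
Proof.
move=> mb.
rewrite (_ : (fun x => _) = (fun x => if b x then 1 else 0)); last first.
  by apply: funext => x; case: (b x).
by apply: measurable_fun_ifT => //; exact: measurable_cst.
Qed.

Lemma pval_measurable d (T : measurableType d) (R : realType) (B : nat)
  (X Y : 'I_B -> T -> R) (alpha : R) :
  (forall i, measurable_fun setT (X i)) -> (forall i, measurable_fun setT (Y i)) ->
  measurable [set e | Defs.pval (fun i => X i e) (fun i => Y i e) <= alpha].
Proof.
move=> mX mY.
have mf : measurable_fun setT (fun e => Defs.pval (fun i => X i e) (fun i => Y i e)).
  rewrite /Defs.pval.
  apply: (measurable_funM (f := fun e => 1 + _) (g := cst _)); last exact: measurable_cst.
  apply: (measurable_funD (f := cst 1)); first exact: measurable_cst.
  apply: measurable_sum => i.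
  apply: measurable_funD; first by apply: natb_measurable; exact: measurable_fun_ltr.
  apply: (measurable_funM (f := cst _)); first exact: measurable_cst.
  by apply: natb_measurable; exact: measurable_fun_eqr.
have := measurable_fun_ler mf (measurable_cst alpha) measurableT (ltac:(done) : measurable [set true]).
by rewrite setTI.
Qed.
Lemma count_bound (R : realType) (m : nat) (a : 'I_m -> 'I_m -> R) (c : R) :
  (forall i j, 0 <= a i j) -> (forall i j, a i j + a j i = 1) ->
  (#|[set j | 2^-1 + \sum_i a i j <= c]%SET|%:R : R) <= Num.max 0 (2 * c - 1).
Proof.
move=> a0 a1.
set J := [set j | _]%SET.
set k : R := #|J|%:R.
have hS : 2 * (\sum_(j in J) \sum_(i in J) a i j) = k * k.
  rewrite mulr2n mulrDl mul1r.
  rewrite [X in _ + X = _]exchange_big /= -big_split /=.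
  rewrite (eq_bigr (fun _ => k)); last first.
    move=> j _; rewrite -big_split /= (eq_bigr (fun _ => 1)); last by move=> i _; exact: a1.
    by rewrite sumr_const /k.
  by rewrite sumr_const -mulr_natr.
have hle : \sum_(j in J) \sum_(i in J) a i j <= k * (c - 2^-1).
  rewrite /k mulr_natl -sumr_const.
  apply: ler_sum => j; rewrite inE => hj.
  apply: (le_trans (y := \sum_i a i j)).
    rewrite [X in _ <= X](bigID (fun i => i \in J)) /= lerDl.
    by apply: sumr_ge0 => i _.
  by rewrite lerBrDl.
have k0 : 0 <= k by rewrite /k ler0n.
have : k * k <= k * (2 * c - 1) by nra.
case: (ltrP 0 k) => [kp|k0'].
  rewrite ler_pM2l // => h; rewrite le_max h orbT //.
have -> : k = 0 by apply/le_anti; rewrite k0 k0'.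
by rewrite le_max lexx.
Qed.
Lemma sum_prob_le d (Omega : measurableType d) (R : realType)
  (P : probability Omega R) (m : nat) (b : 'I_m -> Omega -> bool) (K : R) :
  (forall j, measurable [set w | b j w]) ->
  (forall w, \sum_j ((b j w : nat)%:R : R) <= K) ->
  (\sum_j P [set w | b j w] <= K%:E)%E.
Proof.
move=> mb hK.
have e j : P [set w | b j w] = (\int[P]_(x in setT) (\1_[set w | b j w] x)%:E)%E.
  by rewrite integral_indic // setIT.
rewrite (eq_bigr _ (fun j _ => e j)) -ge0_integral_sum //; last first.
  by move=> j; apply/measurable_EFinP; exact: measurable_indic.
apply: (@le_trans _ _ (\int[P]_(x in setT) (cst K%:E x))%E); last first.
  rewrite integral_cst // [X in (_ * X)%E](_ : _ = 1%E) ?mule1 //.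
  exact: probability_setT.
apply: ge0_le_integral => //.
- by move=> x _; apply: sume_ge0 => j _; rewrite lee_fin.
- apply: emeasurable_sum => j; apply/measurable_EFinP; exact: measurable_indic.
- move=> x _; rewrite sumEFin lee_fin /=.
  have hin j : (x \in [set w | b j w]) = b j x by apply/idP/idP; rewrite inE.
  under eq_bigr => j _ do rewrite indicE hin.
  exact: hK.
Qed.

Definition allG (n k : nat) (G : {set 'S_n}) (f : {ffun 'I_k -> 'S_n}) :=
  [forall i, f i \in G].

Definition Qb (R : realType) (n B : nat) (T : 'S_n -> 'S_n -> n.-tuple R -> R)
  (alpha : R) (r0 : 'S_n) (r : {ffun 'I_B -> 'S_n}) (e : n.-tuple R) : bool :=
  Defs.pval (fun i => T (r i) r0 e) (fun i => T r0 (r i) e) <= alpha.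

Definition aa (R : realType) (n : nat) (T : 'S_n -> 'S_n -> n.-tuple R -> R)
  (u v : 'S_n) (e : n.-tuple R) : R :=
  ((nat_of_bool (T v u e < T u v e))%:R + 2^-1 * (nat_of_bool (T u v e == T v u e))%:R).

Definition Wb (R : realType) (n B : nat) (T : 'S_n -> 'S_n -> n.-tuple R -> R)
  (alpha : R) (j : 'I_B.+1) (rho : {ffun 'I_B.+1 -> 'S_n}) (e : n.-tuple R) : bool :=
  2^-1 + \sum_i aa T (rho i) (rho j) e <= alpha * (B.+1)%:R.

Lemma aa_ge0 (R : realType) n T u v e : 0 <= @aa R n T u v e.
Proof. by rewrite /aa; apply: addr_ge0 => //; apply: mulr_ge0. Qed.

Lemma aa_sym (R : realType) n T u v e : @aa R n T u v e + aa T v u e = 1.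
Proof.
rewrite /aa; case: (ltgtP (T u v e) (T v u e)) => h.
- by rewrite /=; lra.
- by rewrite /=; lra.
- by rewrite /=; lra.
Qed.

Lemma W0Q (R : realType) n B T alpha rho e :
  @Wb R n B T alpha ord0 rho e = Qb T alpha (rho ord0) [ffun i => rho (lift ord0 i)] e.
Proof.
rewrite /Wb /Qb /Defs.pval ler_pdivrMr ?ltr0n // big_ord_recl.
have -> : aa T (rho ord0) (rho ord0) e = 2^-1.
  by rewrite /aa ltxx eqxx /=; lra.
congr (_ <= _).
rewrite addrA (_ : 2^-1 + 2^-1 = 1 :> R); last lra.
congr (_ + _); apply: eq_bigr => i _; rewrite ffunE /aa.
by [].
Qed.

Lemma WjW0 (R : realType) n B T alpha j rho e :
  @Wb R n B T alpha j rho e = Wb T alpha ord0 [ffun i => rho (tperm ord0 j i)] e.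
Proof.
rewrite /Wb ffunE tpermL.
congr (_ + _ <= _).
rewrite (reindex_inj (@perm_inj _ (tperm ord0 j))) /=.
by apply: eq_bigr => i _; rewrite ffunE.
Qed.

Lemma main_bound (R : realType) d (Omega : measurableType d)
  (P : probability Omega R) (n B : nat) (G : {set 'S_n})
  (T : 'S_n -> 'S_n -> n.-tuple R -> R) (eps : Omega -> n.-tuple R) (alpha : R) :
  (1%g \in G) -> (forall s t, s \in G -> t \in G -> (s * t)%g \in G) ->
  (forall s, s \in G -> (s^-1)%g \in G) ->
  measurable_fun setT eps ->
  (forall (s : 'S_n) (A : set (n.-tuple R)), measurable A ->
     P (eps @^-1` A) = P ((fun w => permv s (eps w)) @^-1` A)) ->
  (forall pi1 pi2 : 'S_n, measurable_fun setT (T pi1 pi2)) ->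
  (forall (pi1 pi2 s : 'S_n) (e : n.-tuple R),
     T pi1 pi2 (permv s e) = T (s^-1 * pi1)%g (s^-1 * pi2)%g e) ->
  0 < alpha ->
  (pr_reject P B G T eps alpha < (2 * alpha)%:E)%E.
Proof.
move=> G1 GM GV meps hexch mT htr a0.
pose mQ (r0 : 'S_n) (r : {ffun 'I_B -> 'S_n}) := fine (P [set w | Qb T alpha r0 r (eps w)]).
have measQ r0 r : measurable [set w | @Qb R n B T alpha r0 r (eps w)].
  have := meps measurableT [set e | Qb T alpha r0 r e]
    (pval_measurable alpha (fun i => mT (r i) r0) (fun i => mT r0 (r i))).
  by rewrite setTI.
have finQ r0 r : P [set w | @Qb R n B T alpha r0 r (eps w)] = (mQ r0 r)%:E.
  by rewrite fineK // fin_num_measure.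
rewrite /pr_reject.
under eq_bigr => pis _ do rewrite -/(Qb T alpha 1%g pis (eps _)) finQ.
rewrite sumEFin -EFinM lte_fin.
have NG : (0 < #|G|)%N by apply/card_gt0P; exists 1%g.
have hx s pis : mQ 1%g pis = mQ (s^-1)%g [ffun i => (s^-1 * pis i)%g].
  have eqQ e : Qb T alpha 1%g pis (permv s e) = Qb T alpha (s^-1)%g [ffun i => (s^-1 * pis i)%g] e.
    rewrite /Qb; congr (Defs.pval _ _ <= _); apply/funext => i; by rewrite htr ffunE mulg1.
  rewrite /mQ (_ : [set w | _] = eps @^-1` [set e | Qb T alpha 1%g pis e]) //.
  rewrite (hexch s); last exact: (pval_measurable alpha (fun i => mT (pis i) 1%g) (fun i => mT 1%g (pis i))).
  congr (fine (P _)); apply: eq_set => w /=; by rewrite eqQ.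
have stepB : #|G|%:R * (\sum_(pis : {ffun 'I_B -> 'S_n} | [forall i, pis i \in G]) mQ 1%g pis) =
    \sum_(r0 in G) \sum_(r : {ffun 'I_B -> 'S_n} | [forall i, r i \in G]) mQ r0 r.
  rewrite mulr_natl -sumr_const [RHS](reindex_inj invg_inj) /=.
  apply: eq_big => s.
    by apply/idP/idP => [/GV //|/GV]; rewrite invgK.
  move=> sG.
  under eq_bigr => pis _ do rewrite (hx s pis).
  rewrite (reindex_inj (h := fun r : {ffun 'I_B -> 'S_n} => [ffun i => (s * r i)%g])); last first.
    move=> r1 r2 e; apply/ffunP => i.
    by have := congr1 (fun f : {ffun 'I_B -> 'S_n} => f i) e; rewrite !ffunE /=; exact: mulgI.
  apply: eq_big => r.
    apply/forallP/forallP => h i; have := h i; rewrite ?ffunE.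
      by move/(GM _ _ (GV _ sG)); rewrite mulKg.
    exact: GM.
  move=> _; congr (mQ _ _); apply/ffunP => i; by rewrite !ffunE mulKg.
have stepC : \sum_(r0 in G) \sum_(r : {ffun 'I_B -> 'S_n} | [forall i, r i \in G]) mQ r0 r =
    \sum_(rho : {ffun 'I_B.+1 -> 'S_n} | [forall i, rho i \in G])
       mQ (rho ord0) [ffun i => rho (lift ord0 i)].
  pose h (p : 'S_n * {ffun 'I_B -> 'S_n}) : {ffun 'I_B.+1 -> 'S_n} :=
    [ffun j => if unlift ord0 j is Some i then p.2 i else p.1].
  pose g (rho : {ffun 'I_B.+1 -> 'S_n}) := (rho ord0, [ffun i => rho (lift ord0 i)]).
  have hg : cancel g h.
    move=> rho; apply/ffunP => j; rewrite ffunE.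
    by case: unliftP => [i ->|->] /=; rewrite ?ffunE.
  have gh : cancel h g.
    case=> a r; rewrite /g /h /= ffunE unlift_none; congr pair.
    by apply/ffunP => i; rewrite !ffunE liftK.
  rewrite pair_big_dep [RHS](reindex h); last first.
    by apply: onW_bij; exists g.
  apply: eq_big.
    case=> a r /=; apply/andP/forallP.
      case=> aG /forallP rG j; rewrite ffunE.
      by case: unliftP => [i _|_] /=.
    move=> H; split.
      by have := H ord0; rewrite ffunE unlift_none.
    by apply/forallP => i; have := H (lift ord0 i); rewrite ffunE liftK.
  case=> a r _ /=; have := gh (a, r); rewrite /g => -[-> ->] //.
pose tau (j : 'I_B.+1) (rho : {ffun 'I_B.+1 -> 'S_n}) : {ffun 'I_B.+1 -> 'S_n} :=
  [ffun i => rho (tperm ord0 j i)].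
pose mW (j : 'I_B.+1) (rho : {ffun 'I_B.+1 -> 'S_n}) :=
  fine (P [set w | Wb T alpha j rho (eps w)]).
have WQ (j : 'I_B.+1) rho : [set w | Wb T alpha j rho (eps w)] =
    [set w | Qb T alpha (tau j rho ord0) [ffun i => tau j rho (lift ord0 i)] (eps w)].
  by apply: eq_set => w; rewrite WjW0 W0Q.
have measW (j : 'I_B.+1) rho : measurable [set w | Wb T alpha j rho (eps w)].
  by rewrite (WQ j rho); exact: measQ.
have finW (j : 'I_B.+1) rho : P [set w | Wb T alpha j rho (eps w)] = (mW j rho)%:E.
  by rewrite fineK // fin_num_measure.
have stepC' : \sum_(rho : {ffun 'I_B.+1 -> 'S_n} | [forall i, rho i \in G])
       mQ (rho ord0) [ffun i => rho (lift ord0 i)] =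
    \sum_(rho : {ffun 'I_B.+1 -> 'S_n} | [forall i, rho i \in G]) mW ord0 rho.
  apply: eq_bigr => rho _; rewrite /mW /mQ; congr (fine (P _)).
  by apply: eq_set => w; rewrite W0Q.
have tauK (j : 'I_B.+1) : involutive (tau j).
  by move=> rho; apply/ffunP => i; rewrite !ffunE tpermK.
have stepD (j : 'I_B.+1) : \sum_(rho : {ffun 'I_B.+1 -> 'S_n} | [forall i, rho i \in G]) mW j rho =
    \sum_(rho : {ffun 'I_B.+1 -> 'S_n} | [forall i, rho i \in G]) mW ord0 rho.
  rewrite [RHS](reindex_inj (inv_inj (tauK j))).
  apply: eq_big => rho.
    apply/forallP/forallP => H i; rewrite ?ffunE //.
    by have := H (tperm ord0 j i); rewrite ffunE tpermK.
  move=> _; rewrite /mW; congr (fine (P _)).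
  by apply: eq_set => w; rewrite WjW0.
pose K := Num.max 0 (2 * (alpha * (B.+1)%:R) - 1).
have bnd rho : \sum_j mW j rho <= K.
  have := @sum_prob_le _ _ _ P B.+1 (fun j w => Wb T alpha j rho (eps w)) K (measW^~ rho).
  rewrite (eq_bigr (fun j => (mW j rho)%:E)); last by move=> j _; exact: finW.
  rewrite sumEFin lee_fin; apply => w.
  have -> : \sum_j ((Wb T alpha j rho (eps w) : nat)%:R : R) =
      #|[set j | Wb T alpha j rho (eps w)]%SET|%:R.
    rewrite -natr_sum -sum1dep_card big_mkcond /=; congr _%:R.
    by rewrite [RHS]big_mkcond; apply: eq_bigr => j _; case: (Wb _ _ _ _ _).
  apply: (count_bound (a := fun i j => aa T (rho i) (rho j) (eps w))).
    by move=> i j; exact: aa_ge0.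
  by move=> i j; exact: aa_sym.
have stepE : (B.+1)%:R * \sum_(rho : {ffun 'I_B.+1 -> 'S_n} | [forall i, rho i \in G]) mW ord0 rho
    <= K * (#|G| ^ B.+1)%:R.
  rewrite (_ : _ * _ = \sum_(j < B.+1) \sum_(rho : {ffun 'I_B.+1 -> 'S_n} | [forall i, rho i \in G]) mW j rho); last first.
    rewrite [RHS](eq_bigr (fun _ => \sum_(rho : {ffun 'I_B.+1 -> 'S_n} | [forall i, rho i \in G]) mW ord0 rho)); last first.
      by move=> j _; exact: stepD.
    by rewrite sumr_const card_ord mulr_natl.
  rewrite exchange_big /=.
  apply: le_trans (ler_sum _ (fun rho _ => bnd rho)) _.
  rewrite (eq_bigl (fun rho => rho \in ffun_on G)); last first.
    by move=> rho; apply/forallP/ffun_onP.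
  by rewrite sumr_const card_ffun_on card_ord mulr_natr.
set S := \sum_(i | _) mQ 1%g i.
set X := \sum_(rho | _) mW ord0 rho in stepE.
have hNS : #|G|%:R * S = X by rewrite stepB stepC stepC'.
have apos : 0 < alpha * (B.+1)%:R by rewrite mulr_gt0 // ltr0n.
have Kl : K < 2 * (alpha * (B.+1)%:R).
  rewrite /K gt_max; apply/andP; split; lra.
rewrite natrX exprS in stepE; rewrite natrX.
set nN := (#|G|%:R : R) in hNS stepE *.
set nb := nN ^+ B in stepE *.
have nNpos : 0 < nN by rewrite ltr0n.
have nbpos : 0 < nb by rewrite exprn_gt0.
rewrite ltr_pdivrMr //.
have H : (B.+1)%:R * nN * S < (B.+1)%:R * nN * (2 * alpha * nb).
  apply: (le_lt_trans (y := K * (nN * nb))); first by rewrite -mulrA hNS.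
  rewrite (_ : _ * (2 * alpha * nb) = 2 * (alpha * (B.+1)%:R) * (nN * nb)); last by ring.
  by rewrite ltr_pM2r // mulr_gt0.
by rewrite ltr_pM2l ?mulr_gt0 ?ltr0n // in H.
Qed.

Unset Implicit Arguments. Set Strict Implicit.

Theorem theorem1
  (R : realType) (d : measure_display) (Omega : measurableType d)
  (P : probability Omega R) (n p B : nat)
  (X : 'cV[R]_n) (Z : 'M[R]_(n, p)) (beta : R) (theta : 'cV[R]_p)
  (eps : Omega -> n.-tuple R)
  (S : 'cV[R]_n -> 'M[R]_(n, p) -> 'S_n -> 'S_n -> 'cV[R]_n -> R)
  (Rs : {set 'I_n}) :
  (0 < B)%N ->
  (* null hypothesis H_0 : beta = 0 *)
  beta = 0 ->
  measurable_fun setT eps ->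
  (* exchangeable noise: P_s eps has the same distribution as eps *)
  (forall (s : 'S_n) (A : set (n.-tuple R)), measurable A ->
     P (eps @^-1` A) = P ((fun w => permv s (eps w)) @^-1` A)) ->
  let T := fun (pi1 pi2 : 'S_n) (e : n.-tuple R) =>
             S X Z pi1 pi2 (beta *: X + Z *m theta + tcol e) in
  (* T is a (measurable) statistic of the noise *)
  (forall pi1 pi2 : 'S_n, measurable_fun setT (T pi1 pi2)) ->
  (* transferability *)
  (forall (pi1 pi2 s : 'S_n) (e : n.-tuple R),
     T pi1 pi2 (permv s e) = T (s^-1 * pi1)%g (s^-1 * pi2)%g e) ->
  forall alpha : R, 0 < alpha ->
    (pr_reject P B (fix_rows Rs) T eps alpha < (2 * alpha)%:E)%E.
Proof.
move=> _ _ meps hexch T mT htr alpha a0.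
apply: main_bound => //.
- by rewrite inE; apply/forallP => i; apply/implyP => _; rewrite perm1.
- move=> s t; rewrite !inE => /forallP hs /forallP ht; apply/forallP => i.
  apply/implyP => iR; rewrite permM.
  by rewrite (eqP (implyP (hs i) iR)) (eqP (implyP (ht i) iR)).
- move=> s; rewrite !inE => /forallP hs; apply/forallP => i.
  apply/implyP => iR.
  by rewrite -{1}(eqP (implyP (hs i) iR)) permK.
Qed.
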